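(* Let $S = R\cup B$ be a finite set of points in the plane in general position (no three collinear), colored red ($R$) and blue ($B$), such that $R$ and $B$ are not linearly separable, $CH(B)\subset CH(R)$, $|R| = 3$ and $|B|\ge 2$. Then $S$ contains a balanced convex $4$-hole if and only if there is an edge $\overline{uv}$ of $CH(B)$ (with $u,v\in B$) such that one of the two open half-planes bounded by the line through $u$ and $v$ contains exactly two red points and no blue point.
   Context: A $4$-hole of $S$ is a simple quadrilateral with vertices in $S$ and no point of $S$ in its interior; it is convex if the quadrilateral is convex, and balanced if it has exactly two red and two blue vertices. $CH(X)$ denotes the convex hull of $X$. $R$ and $B$ are linearly separable if some line has all of $R$ strictly on one side and all of $B$ strictly on the other. *)

(* Defs.v *)
From HB Require Import structures.
From mathcomp Require Import all_boot all_order all_algebra.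
Set Implicit Arguments. Unset Strict Implicit. Unset Printing Implicit Defensive.
Import Order.TTheory GRing.Theory Num.Theory.
Local Open Scope ring_scope.

Definition pt (R : realFieldType) := (R * R)%type.

Section Geom.
Variable R : realFieldType.
Implicit Types p q r x : pt R.

(* orientation determinant: > 0 iff p, q, r are in counterclockwise order *)
Definition orient p q r : R :=
  (q.1 - p.1) * (r.2 - p.2) - (q.2 - p.2) * (r.1 - p.1).

Definition general_position (S : seq (pt R)) : Prop :=
  forall p q r, p \in S -> q \in S -> r \in S ->
    p != q -> q != r -> p != r -> orient p q r != 0.

Definition lin_separable (Rs Bs : seq (pt R)) : Prop :=
  exists a b c : R, (a != 0 \/ b != 0) /\
    (forall p, p \in Rs -> a * p.1 + b * p.2 < c) /\
    (forall p, p \in Bs -> a * p.1 + b * p.2 > c).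

Definition in_hull (P : seq (pt R)) x : Prop :=
  exists w : nat -> R, (forall i, 0 <= w i) /\
    \sum_(i < size P) w i = 1 /\
    x.1 = \sum_(i < size P) w i * (nth x P i).1 /\
    x.2 = \sum_(i < size P) w i * (nth x P i).2.

Definition convex_quad a b c d : Prop :=
  0 < orient a b c /\ 0 < orient b c d /\ 0 < orient c d a /\ 0 < orient d a b.

Definition in_quad_interior a b c d x : Prop :=
  0 < orient a b x /\ 0 < orient b c x /\ 0 < orient c d x /\ 0 < orient d a x.

Definition has_balanced_convex_4hole (Rs Bs : seq (pt R)) : Prop :=
  exists a b c d,
    [/\ a \in Rs ++ Bs, b \in Rs ++ Bs, c \in Rs ++ Bs & d \in Rs ++ Bs] /\
    convex_quad a b c d /\
    count (mem Rs) [:: a; b; c; d] = 2%N /\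
    count (mem Bs) [:: a; b; c; d] = 2%N /\
    (forall x, x \in Rs ++ Bs -> ~ in_quad_interior a b c d x).

Definition hull_edge (Bs : seq (pt R)) u v : Prop :=
  [/\ u \in Bs, v \in Bs, u != v &
    (forall w, w \in Bs -> w != u -> w != v -> 0 < orient u v w) \/
    (forall w, w \in Bs -> w != u -> w != v -> orient u v w < 0)].

(* the open half-plane of line uv selected by sign s (s = 1 : left, s = -1 :
   right) contains exactly two points of Rs and no point of Bs *)
Definition halfplane_two_red_no_blue (Rs Bs : seq (pt R)) u v (s : R) : Prop :=
  count (fun p => 0 < s * orient u v p) Rs = 2%N /\
  (forall p, p \in Bs -> ~ (0 < s * orient u v p)).

End Geom.

(* Main.v *)
Require Import Defs.
From HB Require Import structures.
From mathcomp Require Import all_boot all_order all_algebra.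
From mathcomp Require Import ring lra.
Set Implicit Arguments. Unset Strict Implicit. Unset Printing Implicit Defensive.
Import Order.TTheory GRing.Theory Num.Theory.
Local Open Scope ring_scope.

Lemma oC (R : realFieldType) (a b c : pt R) : orient a b c = orient b c a.
Proof. rewrite /orient; ring. Qed.
Lemma oN (R : realFieldType) (a b c : pt R) : orient a c b = - orient a b c.
Proof. rewrite /orient; ring. Qed.
Lemma oS (R : realFieldType) (a b c : pt R) : orient b a c = - orient a b c.
Proof. rewrite /orient; ring. Qed.
Lemma o_aff (R : realFieldType) (p q x : pt R) :
  orient p q x = (-(q.2-p.2))*x.1 + (q.1-p.1)*x.2 + ((q.2-p.2) * p.1 - (q.1-p.1) * p.2).
Proof. rewrite /orient; ring. Qed.
Lemma o_xx (R : realFieldType) (a b : pt R) : orient a b b = 0.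
Proof. rewrite /orient; ring. Qed.
Lemma o_xx' (R : realFieldType) (a b : pt R) : orient a a b = 0.
Proof. rewrite /orient; ring. Qed.
Lemma o_xx'' (R : realFieldType) (a b : pt R) : orient a b a = 0.
Proof. rewrite /orient; ring. Qed.

Lemma hull_ge0 (R : realFieldType) (P : seq (pt R)) x (a b c : R) :
  in_hull P x -> (forall y, y \in P -> 0 <= a * y.1 + b * y.2 + c) ->
  0 <= a * x.1 + b * x.2 + c.
Proof.
move=> [w [w0 [w1 [hx1 hx2]]]] H.
have -> : a * x.1 + b * x.2 + c =
  \sum_(i < size P) w i * (a * (nth x P i).1 + b * (nth x P i).2 + c).
  rewrite hx1 hx2 -{1}[c]mulr1 -w1 !mulr_sumr -!big_split /=.
  by apply: eq_bigr => i _; ring.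
apply: sumr_ge0 => i _; apply: mulr_ge0 => //; apply: H; exact: mem_nth.
Qed.

Lemma hull_gt0 (R : realFieldType) (P : seq (pt R)) x (a b c : R) :
  in_hull P x -> (forall y, y \in P -> 0 < a * y.1 + b * y.2 + c) ->
  0 < a * x.1 + b * x.2 + c.
Proof.
move=> [w [w0 [w1 [hx1 hx2]]]] H.
have -> : a * x.1 + b * x.2 + c =
  \sum_(i < size P) w i * (a * (nth x P i).1 + b * (nth x P i).2 + c).
  rewrite hx1 hx2 -{1}[c]mulr1 -w1 !mulr_sumr -!big_split /=.
  by apply: eq_bigr => i _; ring.
have [j wj] : exists j : 'I_(size P), 0 < w j.
  apply/existsP; apply: contraT; rewrite negb_exists => /forallP Hn.
  have : \sum_(i < size P) w i = 0.
    apply: big1 => i _; have := Hn i; rewrite lt_neqAle w0 andbT negbK.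
    by move/eqP.
  by rewrite w1 => /eqP; rewrite oner_eq0.
rewrite (bigD1 j) //=; apply: ltr_pwDl.
  by apply: mulr_gt0 => //; apply: H; exact: mem_nth.
apply: sumr_ge0 => i _; apply: mulr_ge0 => //; apply: ltW; apply: H; exact: mem_nth.
Qed.

Lemma hull_o_ge0 (R : realFieldType) (P : seq (pt R)) p q x :
  in_hull P x -> (forall y, y \in P -> 0 <= orient p q y) -> 0 <= orient p q x.
Proof. move=> hx H; rewrite o_aff; apply: hull_ge0 hx _ => y /H; by rewrite o_aff. Qed.
Lemma hull_o_le0 (R : realFieldType) (P : seq (pt R)) p q x :
  in_hull P x -> (forall y, y \in P -> orient p q y <= 0) -> orient p q x <= 0.
Proof.
move=> hx H; rewrite -oppr_ge0 -oS; apply: hull_o_ge0 hx _ => y /H.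
by move=> h; rewrite oS oppr_ge0.
Qed.
Lemma hull_o_gt0 (R : realFieldType) (P : seq (pt R)) p q x :
  in_hull P x -> (forall y, y \in P -> 0 < orient p q y) -> 0 < orient p q x.
Proof. move=> hx H; rewrite o_aff; apply: hull_gt0 hx _ => y /H; by rewrite o_aff. Qed.

Lemma in_hull_self (R : realFieldType) (P : seq (pt R)) x : x \in P -> in_hull P x.
Proof.
move=> xP; have jP : (index x P < size P)%N by rewrite index_mem.
pose j := Ordinal jP.
exists (fun i => if i == index x P then 1 else 0); split.
  by move=> i; case: ifP.
have E (F : nat -> R) : \sum_(i < size P) (if (i : nat) == index x P then 1 else 0) * F i = F (index x P).
  rewrite (bigD1 j) //= eqxx mul1r big1 ?addr0 // => i /negbTE.
  by rewrite -val_eqE /= => ->; rewrite mul0r.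
split; first by have := E (fun=> 1); under eq_bigr do rewrite mulr1.
by rewrite (E (fun i => (nth x P i).1)) (E (fun i => (nth x P i).2)) nth_index.
Qed.

Lemma min_exists (T : eqType) (lt : T -> T -> Prop) (s : seq T) :
  s != [::] ->
  (forall x y z, x \in s -> y \in s -> z \in s -> lt x y -> lt y z -> lt x z) ->
  (forall x y, x \in s -> y \in s -> x != y -> lt x y \/ lt y x) ->
  exists2 m, m \in s & forall y, y \in s -> y != m -> lt m y.
Proof.
elim: s => [//|x s IH] _ Htr Hto.
case: (altP (s =P [::])) => [-> | sn].
  exists x; first by rewrite inE.
  by move=> y; rewrite inE => /eqP ->; rewrite eqxx.
have [m ms Hm] : exists2 m, m \in s & forall y, y \in s -> y != m -> lt m y.
  apply: IH => //.
    by move=> a b c ha hb hc; apply: Htr; rewrite inE ?ha ?hb ?hc orbT.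
  by move=> a b ha hb; apply: Hto; rewrite inE ?ha ?hb orbT.
case: (altP (x =P m)) => [xm | xm].
  exists m; first by rewrite inE ms orbT.
  move=> y; rewrite inE => /orP [/eqP -> | ys]; first by rewrite xm eqxx.
  exact: Hm.
have xs : x \in x :: s by rewrite inE eqxx.
have ms' : m \in x :: s by rewrite inE ms orbT.
case: (Hto x m xs ms' xm) => H.
  exists x => // y; rewrite inE => /orP [/eqP -> | ys]; first by rewrite eqxx.
  move=> yx; case: (altP (y =P m)) => [-> // | ym].
  apply: (Htr x m y) => //; first by rewrite inE ys orbT.
  exact: Hm.
exists m => // y; rewrite inE => /orP [/eqP -> | ys] ym //.
exact: Hm.
Qed.

Lemma count2_elim (T : eqType) (P : pred T) (s : seq T) :
  uniq s -> count P s = 2%N ->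
  exists r1 r2, [/\ r1 \in s, r2 \in s, r1 != r2, P r1 & P r2] /\
     (forall x, x \in s -> P x -> x = r1 \/ x = r2).
Proof.
move=> us; rewrite -size_filter.
have uf : uniq (filter P s) by exact: filter_uniq.
have mf x : (x \in filter P s) = P x && (x \in s) by rewrite mem_filter.
case E : (filter P s) uf mf => [|r1 [|r2 [|r3 t]]] //= uf mf _.
move: uf; rewrite inE andbT => r12.
have /andP [p1 s1] : P r1 && (r1 \in s) by rewrite -mf !inE eqxx.
have /andP [p2 s2] : P r2 && (r2 \in s) by rewrite -mf !inE eqxx orbT.
exists r1, r2; split => // x xs px.
have := mf x; rewrite px xs !inE => /orP [/eqP|/eqP]; by [left|right].
Qed.

Lemma count2_intro (T : eqType) (P : pred T) (s : seq T) r1 r2 y :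
  uniq s -> size s = 3%N -> r1 \in s -> r2 \in s -> r1 != r2 -> P r1 -> P r2 ->
  y \in s -> ~~ P y -> count P s = 2%N.
Proof.
move=> us ss s1 s2 r12 p1 p2 ys py.
have H2 : (2 <= count P s)%N.
  rewrite -size_filter; apply: (@leq_trans (size [:: r1; r2])) => //.
  apply: uniq_leq_size; first by rewrite /= inE r12.
  by move=> x; rewrite !inE mem_filter => /orP [/eqP -> | /eqP ->]; apply/andP.
have H3 : count P s != 3%N.
  apply: contraNneq py => h; have : count P s = size s by rewrite ss.
  by move/eqP; rewrite -all_count => /allP ->.
have := count_size P s; rewrite ss; move: H2 H3.
by case: (count P s) => [|[|[|[|]]]].
Qed.

Lemma third_uniq (T : eqType) (s : seq T) a c y z :
  uniq s -> size s = 3%N -> a \in s -> c \in s -> a != c ->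
  y \in s -> z \in s -> y \notin [:: a; c] -> z \notin [:: a; c] -> y = z.
Proof.
move=> us ss sa sc ac sy sz ny nz; apply/eqP; apply: contraT => yz.
have : (size [:: a; c; y; z] <= size s)%N.
  apply: uniq_leq_size.
    move: ny nz; rewrite /= !inE !negb_or => /andP[ya yc] /andP[za zc].
    by rewrite ac yz !(eq_sym a) !(eq_sym c) ya yc za zc.

  by move=> x; rewrite !inE => /or4P [] /eqP ->.
by rewrite ss.
Qed.

Lemma sign_on (R : realFieldType) (T : eqType) (s : seq T) (f : T -> R) a c :
  uniq s -> size s = 3%N -> a \in s -> c \in s -> a != c -> f a = 0 -> f c = 0 ->
  (forall y, y \in s -> 0 <= f y) \/ (forall y, y \in s -> f y <= 0).
Proof.
move=> us ss sa sc ac fa fc.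
case: (boolP (all (fun y => 0 <= f y) s)) => [/allP H | /allPn [y ys]]; first by left.
rewrite -ltNge => fy; right => z zs.
have ny : y \notin [:: a; c].
  by rewrite !inE; apply/negP => /orP [] /eqP E; move: fy; rewrite E ?fa ?fc ltxx.
case: (boolP (z \in [:: a; c])) => [|nz].
  by rewrite !inE => /orP [] /eqP ->; rewrite ?fa ?fc.
by rewrite -(third_uniq us ss sa sc ac ys zs ny nz) ltW.
Qed.

Lemma trans_o (R : realFieldType) (c d x y z : pt R) :
  0 < orient c d x -> 0 < orient c d y -> 0 < orient c d z ->
  0 < orient c x y -> 0 < orient c y z -> 0 < orient c x z.
Proof.
move=> h1 h2 h3 h4 h5.
have E : orient c d y * orient c x z =
  orient c d x * orient c y z + orient c d z * orient c x y by rewrite /orient; ring.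
move: E h1 h2 h3 h4 h5.
move: (orient c d y) (orient c x z) (orient c d x) (orient c y z) (orient c d z) (orient c x y).
move=> A B C D E F H *. nra.
Qed.

Lemma total_o (R : realFieldType) (c x y : pt R) :
  orient c x y != 0 -> 0 < orient c x y \/ 0 < orient c y x.
Proof.
rewrite (oN c x y) oppr_gt0 => h.
by case: (ltgtP (orient c x y) 0) h => // _ _; [right|left].
Qed.

Lemma cone_o (R : realFieldType) (r1 r2 t v b : pt R) :
  0 < orient r1 t v -> 0 < orient r1 r2 t -> orient t v r2 < 0 ->
  0 < orient r1 t b -> orient t v b <= 0 -> orient r2 t b < 0.
Proof.
move=> h1 h2 h3 h4 h5.
have E : orient r1 t v * orient r2 t b =
  orient t v b * orient r1 r2 t + orient r1 t b * orient t v r2 by rewrite /orient; ring.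
move: E h1 h2 h3 h4 h5.
move: (orient r1 t v) (orient r2 t b) (orient t v b) (orient r1 r2 t) (orient r1 t b) (orient t v r2).
move=> A B C D E F H *. nra.
Qed.

Lemma bary_o (R : realFieldType) (r1 r2 b1 b2 t : pt R) :
  0 < orient r1 r2 b1 -> 0 < orient r2 b1 t -> 0 < orient r1 t b1 ->
  0 < orient r1 r2 t -> 0 < orient b1 b2 r1 -> 0 < orient r2 b1 b2 ->
  0 < orient b1 b2 t.
Proof.
move=> h1 h2 h3 h4 h5 h6.
have E : orient r1 r2 b1 * orient b1 b2 t =
  orient r2 b1 t * orient b1 b2 r1 + orient r1 t b1 * orient r2 b1 b2
  by rewrite /orient; ring.
move: E h1 h2 h3 h4 h5 h6.
move: (orient r1 r2 b1) (orient b1 b2 t) (orient r2 b1 t) (orient b1 b2 r1) (orient r1 t b1) (orient r2 b1 b2).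
move=> A B C D E F H *. nra.
Qed.

Definition RHS (R : realFieldType) (Rs Bs : seq (pt R)) :=
  exists u v, hull_edge Bs u v /\
    (halfplane_two_red_no_blue Rs Bs u v 1 \/
     halfplane_two_red_no_blue Rs Bs u v (-1)).

Ltac inS := rewrite mem_cat; apply/orP; first [by left | by right].
Ltac rbneq := match goal with
 | H : forall p q, _ -> _ -> is_true (p != q) |- _ => by apply: H
 end.
Ltac neq := first [ done | by rewrite eq_sym | by rbneq ].
Ltac gpt gp := apply: gp; first [inS | neq].

Lemma key (R : realFieldType) (Rs Bs : seq (pt R)) r1 r2 b1 b2 :
  uniq Rs -> uniq Bs -> (forall p, p \in Rs -> p \notin Bs) ->
  general_position (Rs ++ Bs) ->
  (forall x, in_hull Bs x -> in_hull Rs x) ->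
  size Rs = 3%N -> (2 <= size Bs)%N ->
  r1 \in Rs -> r2 \in Rs -> b1 \in Bs -> b2 \in Bs ->
  convex_quad r1 r2 b1 b2 ->
  (forall x, x \in Rs ++ Bs -> ~ in_quad_interior r1 r2 b1 b2 x) ->
  RHS Rs Bs.
Proof.
move=> uR uB dis; rewrite /general_position => gp hull sR sB r1R r2R b1B b2B [Q1 [Q2 [Q3 Q4]]] emp.
have inR p : p \in Rs -> p \in Rs ++ Bs by rewrite mem_cat => ->.
have inB p : p \in Bs -> p \in Rs ++ Bs by rewrite mem_cat => ->; rewrite orbT.
have rb p q : p \in Rs -> q \in Bs -> p != q.
  by move=> pR qB; apply: contraTneq qB => <-; apply: dis.
have br p q : p \in Bs -> q \in Rs -> p != q by move=> pB qR; rewrite eq_sym rb.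
have r12 : r1 != r2.
  by apply: contraTneq Q1 => ->; rewrite o_xx' ltxx.
have b12 : b1 != b2.
  by apply: contraTneq Q2 => ->; rewrite o_xx ltxx.
have blueR b : b \in Bs -> in_hull Rs b by move=> bB; apply: hull; apply: in_hull_self.
have pos_of p q r : 0 <= orient p q r -> orient p q r != 0 -> 0 < orient p q r.
  by move=> h1 h2; rewrite lt_def h1 h2.
have A : forall b, b \in Bs -> 0 < orient r1 r2 b.
  case: (sign_on (f := orient r1 r2) uR sR r1R r2R r12 (o_xx'' _ _) (o_xx _ _)) => H.
    move=> b bB; apply: pos_of; first exact: hull_o_ge0 (blueR b bB) H.
    by gpt gp.
  by have := hull_o_le0 (blueR b1 b1B) H; rewrite leNgt Q1.
have [t1 t1B Ht1] : exists2 t1, t1 \in Bs & forall b, b \in Bs -> b != t1 -> 0 < orient r1 t1 b.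
  apply: (min_exists (lt := fun x y => 0 < orient r1 x y)).
  - by apply: contraTneq sB => ->.
  - by move=> x y z xB yB zB; apply: trans_o; apply: A.
  - by move=> x y xB yB xy; apply: total_o; gpt gp.
pose s' := filter (predC1 t1) Bs.
have s'n : s' != [::].
  apply/negP => /eqP E.
  have : {subset Bs <= [:: t1]}.
    move=> x xB; rewrite inE; apply: contraT => xt.
    have : x \in s' by rewrite mem_filter /= xt.
    by rewrite E.
  by move/(uniq_leq_size uB); rewrite /= leqNgt sB.
have ms' x : (x \in s') = (x != t1) && (x \in Bs) by rewrite mem_filter.
pose d0 : pt R := (2 * t1.1 - r1.1, 2 * t1.2 - r1.2).
have Hd0 x : x \in s' -> 0 < orient t1 d0 x.
  rewrite ms' => /andP [xt xB].
  have -> : orient t1 d0 x = orient r1 t1 x by rewrite /orient /d0 /=; ring.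
  exact: Ht1.
have [v vs Hv] : exists2 v, v \in s' & forall y, y \in s' -> y != v -> 0 < orient t1 y v.
  apply: (min_exists (lt := fun x y => 0 < orient t1 y x)) => //.
  - move=> x y z xs ys zs h1 h2; apply: (trans_o (d := d0)) h2 h1; exact: Hd0.
  - move=> x y; rewrite !ms' => /andP [xt xB] /andP [yt yB] xy.
    have [h|h] : 0 < orient t1 x y \/ 0 < orient t1 y x; [|by right|by left].
    apply: total_o; apply: gp; rewrite ?inB // eq_sym //.
move: (vs); rewrite ms' => /andP [vt vB].
have Ov b : b \in Bs -> b != t1 -> b != v -> orient t1 v b < 0.
  by move=> bB bt bv; rewrite oN oppr_lt0; apply: Hv => //; rewrite ms' bt.
case: (ltP 0 (orient t1 v r2)) => [hpos | hneg].
  exists t1, v; split.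
    split => //; first by rewrite eq_sym.
    by right.
  left; split.
    have -> : count (fun p => 0 < 1 * orient t1 v p) Rs =
              count (fun p => 0 < orient t1 v p) Rs by apply: eq_count => p; rewrite mul1r.
    case: (boolP (all (fun p => 0 < orient t1 v p) Rs)) => [/allP H | /allPn [y yR ny]].
      by have := hull_o_gt0 (blueR t1 t1B) H; rewrite o_xx'' ltxx.
    apply: (count2_intro (r1 := r1) (r2 := r2) (y := y)) => //=.
    by rewrite oC oC; apply: Ht1.
  move=> p pB; rewrite mul1r.
  case: (altP (p =P t1)) => [-> | pt]; first by rewrite o_xx'' ltxx.
  case: (altP (p =P v)) => [-> | pv]; first by rewrite o_xx ltxx.
  by move: (Ov p pB pt pv); rewrite ltNge => /negP H /ltW.
have hneg' : orient t1 v r2 < 0.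
  by rewrite lt_neqAle hneg andbT; gpt gp.
have C b : b \in Bs -> b != t1 -> orient r2 t1 b < 0.
  move=> bB bt; apply: (cone_o (r1 := r1) (v := v)) => //.
  - by apply: Ht1.
  - exact: A.
  - exact: Ht1.
  case: (altP (b =P v)) => [-> | bv]; first by rewrite o_xx.
  exact: ltW (Ov b bB bt bv).
case: (altP (t1 =P b1)) => [E | t1b1].
  by have := C b2 b2B; rewrite E eq_sym b12 => /(_ isT); rewrite ltNge ltW.
case: (altP (t1 =P b2)) => [E | t1b2].
  have := Ht1 b1 b1B; rewrite E b12 => /(_ isT).
  by rewrite oN oppr_gt0 oC ltNge (ltW Q3).
exfalso; apply: (emp t1); first exact: inB.
split; first exact: A.
split; first by rewrite oN oppr_gt0 C // eq_sym.
split; last by rewrite oC; apply: Ht1; rewrite // eq_sym.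
apply: (bary_o (r1 := r1) (r2 := r2)) => //.
- by rewrite oN oppr_gt0 C // eq_sym.
- by apply: Ht1; rewrite // eq_sym.
- exact: A.
Qed.



Lemma back_aux (R : realFieldType) (Rs Bs : seq (pt R)) u v r1 r2 :
  uniq Rs -> (forall p, p \in Rs -> p \notin Bs) ->
  general_position (Rs ++ Bs) ->
  (forall x, in_hull Bs x -> in_hull Rs x) -> size Rs = 3%N ->
  u \in Bs -> v \in Bs -> u != v -> r1 \in Rs -> r2 \in Rs -> r1 != r2 ->
  0 < orient u v r1 -> 0 < orient u v r2 ->
  (forall x, x \in Rs -> 0 < orient u v x -> x = r1 \/ x = r2) ->
  (forall p, p \in Bs -> ~ (0 < orient u v p)) ->
  0 < orient v r1 r2 ->
  has_balanced_convex_4hole Rs Bs.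
Proof.
move=> uR dis; rewrite /general_position => gp hull sR uB vB uv r1R r2R r12 p1 p2 only noB vo.
have rb p q : p \in Rs -> q \in Bs -> p != q.
  by move=> pR qB; apply: contraTneq qB => <-; apply: dis.
have br p q : p \in Bs -> q \in Rs -> p != q by move=> pB qR; rewrite eq_sym rb.
have blueR b : b \in Bs -> in_hull Rs b by move=> bB; apply: hull; apply: in_hull_self.
have nR p : p \in Bs -> (p \in Rs) = false.
  by move=> pB; apply/negbTE; apply: contraTN pB; apply: dis.
have nB p : p \in Rs -> (p \in Bs) = false.
  by move=> pR; apply/negbTE; apply: dis.
have o3 : 0 < orient r1 r2 u.
  have nz : orient r1 r2 u != 0 by gpt gp.
  case: (sign_on (f := orient r1 r2) uR sR r1R r2R r12 (o_xx'' _ _) (o_xx _ _)) => H.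
    by rewrite lt_def nz; exact: hull_o_ge0 (blueR u uB) H.
  by have := hull_o_le0 (blueR v vB) H; rewrite oC oC leNgt vo.
exists u, v, r1, r2; split.
  by split; inS.
split; first by rewrite /convex_quad; split => //; split => //; split => //; rewrite oC.
split; first by rewrite /= (nR u uB) (nR v vB) r1R r2R.
split; first by rewrite /= uB vB (nB r1 r1R) (nB r2 r2R).
move=> x; rewrite mem_cat => /orP [xR | xB] [h1 [h2 [h3 h4]]].
  by case: (only x xR h1) => E; move: h2 h3; rewrite E ?o_xx ?o_xx' ?ltxx.
exact: (noB x xB h1).
Qed.

Lemma back (R : realFieldType) (Rs Bs : seq (pt R)) u v :
  uniq Rs -> (forall p, p \in Rs -> p \notin Bs) ->
  general_position (Rs ++ Bs) ->
  (forall x, in_hull Bs x -> in_hull Rs x) -> size Rs = 3%N ->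
  u \in Bs -> v \in Bs -> u != v ->
  halfplane_two_red_no_blue Rs Bs u v 1 ->
  has_balanced_convex_4hole Rs Bs.
Proof.
move=> uR dis gp hull sR uB vB uv [cnt noB].
have cnt' : count (fun p => 0 < orient u v p) Rs = 2%N.
  by rewrite -cnt; apply: eq_count => p; rewrite mul1r.
have noB' p : p \in Bs -> ~ (0 < orient u v p) by move/noB; rewrite mul1r.
have [r1 [r2 [[r1R r2R r12 p1 p2] only]]] := count2_elim uR cnt'.
have nz : orient v r1 r2 != 0.
  apply: gp; rewrite ?mem_cat ?r1R ?r2R ?vB ?orbT //.
    by apply: contraTneq vB => ->; apply: dis.
  by apply: contraTneq vB => ->; apply: dis.
case: (ltgtP 0 (orient v r1 r2)) nz => // h _.
  exact: (back_aux uR dis gp hull sR uB vB uv r1R r2R r12 p1 p2 only noB' h).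
apply: (back_aux uR dis gp hull sR uB vB uv r2R r1R _ p2 p1 _ noB') => //; first by rewrite eq_sym.
  by move=> x xR /(only x xR) [] ->; [right|left].
by rewrite oN oppr_gt0.
Qed.

Lemma alt_false (R : realFieldType) (Rs Bs : seq (pt R)) a b c d :
  uniq Rs -> (forall x, in_hull Bs x -> in_hull Rs x) -> size Rs = 3%N ->
  a \in Rs -> c \in Rs -> b \in Bs -> d \in Bs -> convex_quad a b c d -> False.
Proof.
move=> uR hull sR aR cR bB dB [h1 [h2 [h3 h4]]].
have ac : a != c by apply: contraTneq h1 => ->; rewrite o_xx'' ltxx.
have blueR p : p \in Bs -> in_hull Rs p by move=> pB; apply: hull; apply: in_hull_self.
case: (sign_on (f := orient a c) uR sR aR cR ac (o_xx'' _ _) (o_xx _ _)) => H.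
  by have := hull_o_ge0 (blueR b bB) H; rewrite oN oppr_ge0 leNgt h1.
by have := hull_o_le0 (blueR d dB) H; rewrite oC leNgt h3.
Qed.

Definition hole4 (R : realFieldType) (Rs Bs : seq (pt R)) a b c d :=
  convex_quad a b c d /\ (forall x, x \in Rs ++ Bs -> ~ in_quad_interior a b c d x).

Lemma hole4_rot (R : realFieldType) (Rs Bs : seq (pt R)) a b c d :
  hole4 Rs Bs a b c d -> hole4 Rs Bs b c d a.
Proof.
move=> [[h1 [h2 [h3 h4]]] E]; split; first by [].
by move=> x xS [i1 [i2 [i3 i4]]]; apply: (E x xS).
Qed.

Theorem lemma6 (R : realFieldType) (Rs Bs : seq (pt R)) :
  uniq Rs -> uniq Bs -> (forall p, p \in Rs -> p \notin Bs) ->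
  general_position (Rs ++ Bs) ->
  ~ lin_separable Rs Bs ->
  (forall x, in_hull Bs x -> in_hull Rs x) ->
  size Rs = 3%N -> (2 <= size Bs)%N ->
  has_balanced_convex_4hole Rs Bs <->
  exists u v, hull_edge Bs u v /\
    (halfplane_two_red_no_blue Rs Bs u v 1 \/
     halfplane_two_red_no_blue Rs Bs u v (-1)).
Proof.
move=> uR uB dis gp _ hull sR sB; split.
  move=> [a [b [c [d [[aS bS cS dS] [cq [cR [cB emp]]]]]]]].
  have H0 : hole4 Rs Bs a b c d by [].
  have H1 := hole4_rot H0.
  have H2 := hole4_rot H1.
  have H3 := hole4_rot H2.
  have col x : x \in Rs ++ Bs -> x \in Bs = ~~ (x \in Rs).
    rewrite mem_cat => /orP [xR | xB].
      by rewrite xR; apply/negbTE; apply: dis.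
    by rewrite xB; case xR: (x \in Rs) => //; move: (dis x xR); rewrite xB.
  have mB x : x \in Rs ++ Bs -> ~~ (x \in Rs) -> x \in Bs by move=> xS; rewrite col.
  move: cR cB; rewrite /= (col a aS) (col b bS) (col c cS) (col d dS).
  have K := @key R Rs Bs.
  case aR: (a \in Rs); case bR: (b \in Rs); case cR: (c \in Rs); case dR: (d \in Rs) => //= _ _.
  all: try (have aB : a \in Bs by apply: mB; rewrite ?aR).
  all: try (have bB : b \in Bs by apply: mB; rewrite ?bR).
  all: try (have cB : c \in Bs by apply: mB; rewrite ?cR).
  all: try (have dB : d \in Bs by apply: mB; rewrite ?dR).
  all: first [ by case: H0 => q e; apply: (K a b c d)
             | by case: H1 => q e; apply: (K b c d a)
             | by case: H2 => q e; apply: (K c d a b)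
             | by case: H3 => q e; apply: (K d a b c)
             | by case: (alt_false uR hull sR aR cR bB dB cq)
             | by case: H1 => q e; case: (alt_false uR hull sR bR dR cB aB q)
             | idtac ].
move=> [u [v [[uBs vB uv _] [H | [cnt noB]]]]].
  exact: (back uR dis gp hull sR uBs vB uv H).
apply: (back uR dis gp hull sR vB uBs _); first by rewrite eq_sym.
split.
  rewrite -cnt; apply: eq_count => p; by rewrite mul1r mulN1r oS.
by move=> p /noB; rewrite mul1r mulN1r -oS.
Qed.
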